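(* Let $\pi$ be a positive differentiable probability density on $\mathbb{R}$ such that $(\log\pi)'$ is bounded in some neighbourhood of $0$, and for $\lambda>0$ let $\pi^{(\lambda)}(x)=\lambda^{-1}\pi(x/\lambda)$. Fix $\sigma>0$ and $x\in\mathbb{R}$. Let $Q^R(x,\cdot)=N(x,\sigma^2)$, let $Q^M_\lambda(x,\cdot)=N\big(x+\frac{\sigma^2}{2}(\log\pi^{(\lambda)})'(x),\sigma^2\big)$, and let $Q^B_\lambda(x,dy)=\frac{2\mu_\sigma(y-x)}{1+e^{-(\log\pi^{(\lambda)})'(x)(y-x)}}dy$ where $\mu_\sigma$ is the $N(0,\sigma^2)$ density. Then both $\|Q^M_\lambda(x,\cdot)-Q^R(x,\cdot)\|_{TV}$ and $\|Q^B_\lambda(x,\cdot)-Q^R(x,\cdot)\|_{TV}$ are at most $\Theta(1/\lambda)$ as $\lambda\uparrow\infty$, i.e. $\limsup_{\lambda\to\infty}\lambda\,\|Q^{M/B}_\lambda(x,\cdot)-Q^R(x,\cdot)\|_{TV}<\infty$.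
   Context: $\|\mu-\nu\|_{TV}=\sup_{A}|\mu(A)-\nu(A)|$. *)

(* Defs.v *)
From HB Require Import structures.
From mathcomp Require Import all_boot all_order all_algebra.
From mathcomp Require Import all_classical all_reals all_analysis.
Set Implicit Arguments. Unset Strict Implicit. Unset Printing Implicit Defensive.
Import Order.TTheory GRing.Theory Num.Def Num.Theory.
Import numFieldNormedType.Exports.
Local Open Scope classical_set_scope.
Local Open Scope ring_scope.

Definition pos_diff_density {R : realType} (p : R -> R) : Prop :=
  (forall x, 0 < p x) /\ (forall x, derivable p x 1) /\
  (\int[lebesgue_measure]_x (p x)%:E = 1)%E.

Definition logder {R : realType} (f : R -> R) (x : R) : R :=
  derive1 (fun y => ln (f y)) x.

Definition scaled_density {R : realType} (p : R -> R) (lam : R) (x : R) : R :=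
  lam^-1 * p (x / lam).

(* Q^R(x, .) = N(x, sigma^2)  (normal_prob takes the standard deviation) *)
Definition QR {R : realType} (sigma x : R) : set R -> \bar R :=
  normal_prob x sigma.

Definition QM {R : realType} (p : R -> R) (sigma lam x : R) : set R -> \bar R :=
  normal_prob (x + sigma ^+ 2 / 2 * logder (scaled_density p lam) x) sigma.

Definition QB {R : realType} (p : R -> R) (sigma lam x : R) : set R -> \bar R :=
  fun A => (\int[lebesgue_measure]_(y in A)
     (2 * normal_pdf 0 sigma (y - x) /
        (1 + expR (- (logder (scaled_density p lam) x) * (y - x))))%:E)%E.

Definition tv_dist {R : realType} (mu nu : set R -> \bar R) : \bar R :=
  ereal_sup [set (`|mu A - nu A|)%E | A in [set A : set R | measurable A]].

(* Main.v *)
From HB Require Import structures.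
From mathcomp Require Import all_boot all_order all_algebra.
From mathcomp Require Import all_classical all_reals all_analysis.
From mathcomp Require Import measurable_realfun.
Require Import Defs.
From mathcomp Require Import ring lra.
Import Order.TTheory GRing.Theory Num.Def Num.Theory.
Import numFieldNormedType.Exports.
Local Open Scope classical_set_scope.
Local Open Scope ring_scope.
Set Implicit Arguments. Unset Strict Implicit.

Lemma logderE (R : realType) (p : R -> R) z : 0 < p z -> derivable p z 1 ->
  logder p z = derive1 p z / p z.
Proof.
move=> pz dp.
have hp : is_derive z 1 p (derive1 p z) by rewrite derive1E; exact/derivableP.
have := is_derive1_comp (is_derive1_ln pz) hp.
move=> h; rewrite /logder derive1E.
have -> : (fun y => ln (p y)) = (@ln R) \o p by [].
by rewrite (@derive_val _ _ _ _ _ _ _ h) mulrC.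
Qed.

Lemma logder_scaled (R : realType) (p : R -> R) lam z : 0 < lam ->
  (forall y, 0 < p y) -> (forall y, derivable p y 1) ->
  logder (scaled_density p lam) z = lam^-1 * logder p (z / lam).
Proof.
move=> l0 pp dp.
have hp : is_derive (z / lam) 1 p (derive1 p (z/lam)) by rewrite derive1E; exact/derivableP.
have hd : is_derive z 1 (fun y : R => y / lam) (lam^-1).
  by apply: is_derive_eq; rewrite scaler0 add0r -[RHS]mulr1.
have hc := @is_derive1_comp _ p (fun y => y / lam) z _ _ hp hd.
have hs : is_derive z 1 (scaled_density p lam) (lam^-1 * (derive1 p (z / lam) * lam^-1)).
  have -> : scaled_density p lam = (fun y => lam^-1 * (p \o (fun y => y / lam)) y) by [].
  exact: is_deriveZ.
have sp : 0 < scaled_density p lam z by rewrite /scaled_density mulr_gt0 ?invr_gt0.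
rewrite logderE //.
rewrite logderE //.
rewrite derive1E (@derive_val _ _ _ _ _ _ _ hs) /scaled_density.
field; by rewrite !gt_eqF ?pp.
Qed.

Lemma abs_ereal_aux (R : realType) (X Y : \bar R) (c : R) :
  (0 <= X)%E -> (0 <= Y)%E -> (Y <= 1)%E -> (X <= Y + c%:E)%E -> (Y <= X + c%:E)%E ->
  (`|X - Y| <= c%:E)%E.
Proof.
case: Y => [y| |] //; case: X => [r| |] //= _ _ _.
rewrite -!EFinD !lee_fin => h1 h2.
rewrite ler_norml; apply/andP; split; lra.
Qed.

Lemma tv_bound (R : realType) (f1 : R -> R) (x s c : R) : 0 < s -> 0 <= c ->
  (forall y, 0 <= f1 y) -> measurable_fun setT f1 ->
  (forall y, `|f1 y - normal_pdf x s y| <= c * normal_pdf x (2*s) y) ->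
  (tv_dist (fun A => \int[lebesgue_measure]_(y in A) (f1 y)%:E)
     (normal_prob x s) <= c%:E)%E.
Proof.
move=> s0 c0 f10 mf1 hb.
apply: ge_ereal_sup => _ [A mA <-].
set mu := (@lebesgue_measure R).
have mf0 : measurable_fun setT (normal_pdf x s) by exact: measurable_normal_pdf.
have mg : measurable_fun setT (fun y => c * normal_pdf x (2*s) y).
  by apply: measurable_realfun.measurable_funM => //; exact: measurable_normal_pdf.
have hG : (\int[mu]_(y in A) (c * normal_pdf x (2*s) y)%:E <= c%:E)%E.
  under eq_integral do rewrite EFinM.
  rewrite ge0_integralZl //; last first.
  - by move=> y _; rewrite lee_fin normal_pdf_ge0.
  - by apply/measurable_realfun.measurable_EFinP/measurable_funTS; exact: measurable_normal_pdf.
  rewrite -[leRHS]mule1 lee_wpmul2l ?lee_fin //.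
  rewrite -(integral_normal_pdf x (2*s)).
  apply: ge0_subset_integral => //.
  - by apply/measurable_realfun.measurable_EFinP; exact: measurable_normal_pdf.
  - by move=> y _; rewrite lee_fin normal_pdf_ge0.
have mE : forall f : R -> R, measurable_fun setT f ->
    measurable_fun A (fun y => (f y)%:E).
  by move=> f mf; apply/measurable_realfun.measurable_EFinP; exact: measurable_funTS.
have hY1 : (normal_prob x s A <= 1)%E.
  rewrite -(integral_normal_pdf x s).
  apply: ge0_subset_integral => //.
  - by apply/measurable_realfun.measurable_EFinP; exact: measurable_normal_pdf.
  - by move=> y _; rewrite lee_fin normal_pdf_ge0.
have hsum : forall f : R -> R, measurable_fun setT f -> (forall y, 0 <= f y) ->
   (\int[mu]_(y in A) (f y + c * normal_pdf x (2 * s) y)%:E =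
    \int[mu]_(y in A) (f y)%:E + \int[mu]_(y in A) (c * normal_pdf x (2 * s) y)%:E)%E.
  move=> f mf f0; under eq_integral do rewrite EFinD.
  apply: ge0_integralD => //.
  - by move=> y _; rewrite lee_fin.
  - exact: mE.
  - by move=> y _; rewrite lee_fin mulr_ge0 ?normal_pdf_ge0.
  - exact: mE.
apply: abs_ereal_aux.
- by apply: integral_ge0 => y _; rewrite lee_fin.
- by apply: integral_ge0 => y _; rewrite lee_fin normal_pdf_ge0.
- exact: hY1.
- apply: le_trans; last exact: (leeD2l _ hG).
  rewrite /normal_prob -hsum //; last by move=> y; exact: normal_pdf_ge0.
  apply: ge0_le_integral => //.
  + by move=> y _; rewrite lee_fin.
  + exact: mE.
  + apply: mE; exact: measurable_funD.
  + move=> y _; rewrite lee_fin.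
    have := hb y; rewrite ler_norml => /andP[_]; lra.
- apply: le_trans; last exact: (leeD2l _ hG).
  rewrite /normal_prob -hsum //.
  apply: ge0_le_integral => //.
  + by move=> y _; rewrite lee_fin normal_pdf_ge0.
  + exact: mE.
  + apply: mE; exact: measurable_funD.
  + move=> y _; rewrite lee_fin.
    have := hb y; rewrite ler_norml => /andP[+ _]; lra.
Qed.

Lemma arith1 (R : realType) (u E : R) : E - u * E <= 1 -> E - 1 <= u * E.
Proof. lra. Qed.

Lemma expm1_bound (R : realType) (u : R) : `|expR u - 1| <= `|u| * expR `|u|.
Proof.
have e1 := expR_ge1Dx u; have e2 := expR_ge1Dx (- u).
have eN : expR (- u) * expR u = 1 by rewrite -expRD addNr expR0.
have p1 := expR_gt0 u; have p2 := expR_gt0 (- u).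
case: (leP 0 u) => u0.
- rewrite (ger0_norm u0) ger0_norm; last lra.
  have := ler_wpM2r (ltW p1) e2; rewrite eN mulrBl mul1r. exact: arith1.
- have : expR u < 1 by rewrite expR_lt1.
  move=> lt1; rewrite (ltr0_norm u0) ltr0_norm; last lra.
  have : 1 <= expR (- u) by lra.
  nra.
Qed.

Lemma peak2 (R : realType) (s : R) : 0 < s ->
  normal_peak (2 * s) = normal_peak s / 2.
Proof.
move=> s0; rewrite /normal_peak.
have -> : (2 * s) ^+ 2 * pi *+ 2 = 2 ^+ 2 * (s ^+ 2 * pi *+ 2) by rewrite !mulrnAr; ring.
rewrite sqrtrM ?sqr_ge0 // sqrtr_sqr ger0_norm // invfM mulrC //.
Qed.

Lemma pdfE (R : realType) (m s y : R) : 0 < s ->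
  normal_pdf m s y = normal_peak s * expR (- (y - m) ^+ 2 / (s ^+ 2 *+ 2)).
Proof. by move=> s0; rewrite /normal_pdf gt_eqF. Qed.

Lemma ar_w (R : realType) (T iS : R) : 0 <= iS ->
  (2 * T + 1) * iS / 2 - 3 * (T ^+ 2 * iS / 8) <= 3 * iS / 2 - T ^+ 2 * iS / 8.
Proof. move=> h; have : 0 <= iS * (T - 2) ^+ 2 by rewrite mulr_ge0 ?sqr_ge0. nra. Qed.

Lemma ar_w2 (R : realType) (T S iS : R) : 0 <= T -> 0 < S -> S * iS = 1 ->
  (2 * T + 1) * iS / 2 <= (8 * S + 1) * iS / 2 * (1 + T ^+ 2 * iS / 8).
Proof.
move=> T0 S0 h.
have iS0 : 0 < iS by nra.
have h1 : 0 <= iS * (8 * S - T) ^+ 2 by rewrite mulr_ge0 ?sqr_ge0 ?ltW.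
have h2 : 2 * T + 1 <= (8 * S + 1) * (1 + T ^+ 2 * iS / 8).
  have -> : (8 * S + 1) * (1 + T ^+ 2 * iS / 8) = 8 * S + 1 + T ^+ 2 * (S * iS) + T ^+ 2 * iS / 8 by field; rewrite ?pnatr_eq0.
  rewrite h; have : 0 <= T ^+ 2 by rewrite sqr_ge0.
  have E : iS * (8 * S - T) ^+ 2 = 64 * S * (S * iS) - 16 * T * (S * iS) + T^+2 * iS by field; rewrite ?pnatr_eq0.
  rewrite E h in h1. lra.
have := ler_wpM2r (ltW iS0) h2. nra.
Qed.

Lemma ar_u (R : realType) (t d iS : R) : 0 <= iS -> `|d| <= 1 ->
  `|(2 * t * d - d ^+ 2) * iS / 2| <= `|d| * ((2 * `|t| + 1) * iS / 2).
Proof.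
move=> iS0 d1.
have h : `|2 * t * d - d ^+ 2| <= `|d| * (2 * `|t| + 1).
  apply: le_trans (ler_normB _ _) _.
  rewrite normrX !normrM normr_nat.
  have := normr_ge0 d; have := normr_ge0 t; nra.
rewrite -mulrA normrM (ger0_norm (x := iS / 2)); last by rewrite divr_ge0.
have := ler_wpM2r (x := iS / 2) ltac:(by rewrite divr_ge0) h.
by rewrite -!mulrA.
Qed.

Lemma QM_pt (R : realType) (s d x y : R) : 0 < s -> `|d| <= 1 ->
  `|normal_pdf (x + d) s y - normal_pdf x s y| <=
  `|d| * (2 * ((8 * s ^+ 2 + 1) * (s ^+ 2)^-1 / 2 * expR (3 * (s ^+ 2)^-1 / 2)))
   * normal_pdf x (2 * s) y.
Proof.
move=> s0 d1.
rewrite !pdfE ?mulr_gt0 // peak2 //.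
set S := s ^+ 2; set iS := S^-1; set t := y - x.
have S0 : 0 < S by rewrite exprn_gt0.
have SiS : S * iS = 1 by rewrite mulfV ?gt_eqF.
have iS0 : 0 < iS by rewrite invr_gt0.
set A := t ^+ 2 * iS / 8.
set u := (2 * t * d - d ^+ 2) * iS / 2.
have e0 : expR (- (y - x) ^+ 2 / (S *+ 2)) = expR (- A) * expR (- (3 * A)).
  rewrite -expRD; congr expR; rewrite /A /iS -/t; field; exact: lt0r_neq0.
have e1 : expR (- (y - (x + d)) ^+ 2 / (S *+ 2)) = expR (- A) * expR (- (3 * A)) * expR u.
  rewrite -!expRD; congr expR; rewrite /A /u /iS; have -> : y - (x + d) = t - d by rewrite /t; ring.
  field; exact: lt0r_neq0.
have e2 : expR (- (y - x) ^+ 2 / ((2 * s) ^+ 2 *+ 2)) = expR (- A).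
  congr expR; rewrite /A /iS -/t /S; field; exact: lt0r_neq0.
rewrite e0 e1 e2.
set w := (2 * `|t| + 1) * iS / 2.
have w0 : 0 <= w by rewrite /w !mulr_ge0 ?ltW ?invr_gt0 // addr_ge0.
have hu1 : `|u| <= `|d| * w by exact: ar_u (ltW iS0) d1.
have hu2 : `|u| <= w by apply: le_trans hu1 _; rewrite ler_piMl.
have hu : `|expR u - 1| <= `|d| * w * expR w.
  apply: le_trans (expm1_bound u) _.
  apply: ler_pM => //.
  by rewrite ler_expR.
have tT : t ^+ 2 = `|t| ^+ 2 by rewrite real_normK // num_real.
have A0 : 0 <= A by rewrite /A divr_ge0 // mulr_ge0 ?sqr_ge0 ?ltW.
have K0 : 0 <= (8 * S + 1) * iS / 2.
  by apply: divr_ge0 => //; apply: mulr_ge0; lra.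
have hk : expR (- (3 * A)) * (w * expR w) <=
    (8 * S + 1) * iS / 2 * expR (3 * iS / 2).
  have h1 : expR (- (3 * A)) * expR w <= expR (3 * iS / 2 - A).
    rewrite -expRD ler_expR addrC.
    have := ar_w `|t| (ltW iS0); rewrite /w /A tT; lra.
  have h2 : w <= (8 * S + 1) * iS / 2 * expR A.
    apply: le_trans (ar_w2 (normr_ge0 t) S0 SiS) _.
    rewrite /A tT; apply: ler_wpM2l; first exact: K0.
    exact: expR_ge1Dx.
  rewrite mulrCA.
  apply: le_trans (ler_wpM2r _ h2) _; first by rewrite mulr_ge0 ?expR_ge0.
  rewrite -[_ * expR A * _]mulrA; apply: ler_wpM2l => //.
  apply: le_trans (ler_wpM2l (expR_ge0 A) h1) _.
  by rewrite -expRD addrC subrK.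
set P := normal_peak s.
have P0 : 0 <= P by exact: normal_peak_ge0.
set K := (8 * S + 1) * iS / 2 * expR (3 * iS / 2).
have -> : P * (expR (- A) * expR (- (3 * A)) * expR u) - P * (expR (- A) * expR (- (3 * A)))
   = (P * expR (- A)) * (expR (- (3 * A)) * (expR u - 1)) by ring.
have -> : `|d| * (2 * K) * (P / 2 * expR (- A)) = (P * expR (- A)) * (`|d| * K).
  by field; rewrite ?pnatr_eq0.
rewrite normrM (ger0_norm (x := P * expR (- A))); last by rewrite mulr_ge0 ?expR_ge0.
apply: ler_wpM2l; first by rewrite mulr_ge0 ?expR_ge0.
rewrite normrM ger0_norm ?expR_ge0 //.
apply: le_trans (ler_wpM2l (expR_ge0 _) hu) _.
have d0 := normr_ge0 d.
have := ler_wpM2l d0 hk.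
move=> h.
have -> : expR (- (3 * A)) * (`|d| * w * expR w) = `|d| * (expR (- (3 * A)) * (w * expR w)) by ring.
exact: h.
Qed.

Lemma expm1_bound2 (R : realType) (u : R) : `|expR u - 1| <= `|u| * (1 + expR u).
Proof.
have e1 := expR_ge1Dx u; have e2 := expR_ge1Dx (- u).
have eN : expR (- u) * expR u = 1 by rewrite -expRD addNr expR0.
have p1 := expR_gt0 u; have p2 := expR_gt0 (- u).
case: (leP 0 u) => u0.
- rewrite (ger0_norm u0) ger0_norm; last lra.
  have := ler_wpM2r (ltW p1) e2; rewrite eN mulrBl mul1r => h.
  have : 0 <= u by []. nra.
- have : expR u < 1 by rewrite expR_lt1.
  move=> lt1; rewrite (ltr0_norm u0) ltr0_norm; last lra.
  nra.
Qed.

Lemma ar_t (R : realType) (T s iS : R) : 0 < s -> s ^+ 2 * iS = 1 ->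
  T <= s * (1 + 3 * (T ^+ 2 * iS / 8)).
Proof.
move=> s0 h.
have E : 8 * s * (s * (1 + 3 * (T ^+ 2 * iS / 8)) - T) =
   8 * s ^+ 2 + 3 * T ^+ 2 * (s ^+ 2 * iS) - 8 * s * T.
  by field; rewrite ?pnatr_eq0.
rewrite h mulr1 in E.
have : 0 <= 8 * s * (s * (1 + 3 * (T ^+ 2 * iS / 8)) - T).
  rewrite E; have := sqr_ge0 (3 * T - 4 * s); nra.
rewrite pmulr_rge0; first by lra.
lra.
Qed.

Lemma QB_pt (R : realType) (s a x y : R) : 0 < s ->
  `|2 * normal_pdf 0 s (y - x) / (1 + expR (- a * (y - x))) - normal_pdf x s y| <=
  `|a| * (2 * s) * normal_pdf x (2 * s) y.
Proof.
move=> s0.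
rewrite !pdfE ?mulr_gt0 // peak2 // subr0.
set S := s ^+ 2; set iS := S^-1; set t := y - x.
have S0 : 0 < S by rewrite exprn_gt0.
have SiS : S * iS = 1 by rewrite mulfV ?gt_eqF.
have iS0 : 0 < iS by rewrite invr_gt0.
set A := t ^+ 2 * iS / 8.
have e0 : expR (- t ^+ 2 / (S *+ 2)) = expR (- A) * expR (- (3 * A)).
  rewrite -expRD; congr expR; rewrite /A /iS; field; exact: lt0r_neq0.
have e2 : expR (- t ^+ 2 / ((2 * s) ^+ 2 *+ 2)) = expR (- A).
  congr expR; rewrite /A /iS /S; field; exact: lt0r_neq0.
rewrite e0 e2.
set P := normal_peak s.
have P0 : 0 <= P by exact: normal_peak_ge0.
set E := expR (- a * t).
have E0 : 0 < E by exact: expR_gt0.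
have -> : 2 * (P * (expR (- A) * expR (- (3 * A)))) / (1 + E) - P * (expR (- A) * expR (- (3 * A)))
   = (P * expR (- A)) * (expR (- (3 * A)) * ((1 - E) / (1 + E))).
  by field; rewrite gt_eqF //; lra.
have -> : `|a| * (2 * s) * (P / 2 * expR (- A)) = (P * expR (- A)) * (`|a| * s).
  by field; rewrite ?pnatr_eq0.
rewrite normrM (ger0_norm (x := P * expR (- A))); last by rewrite mulr_ge0 ?expR_ge0.
apply: ler_wpM2l; first by rewrite mulr_ge0 ?expR_ge0.
rewrite normrM ger0_norm ?expR_ge0 //.
have h1 : `|(1 - E) / (1 + E)| <= `|a| * `|t|.
  rewrite normrM normfV (ger0_norm (x := 1 + E)); last lra.
  rewrite ler_pdivrMr; last lra.
  have := expm1_bound2 (- a * t); rewrite -/E normrM normrN distrC.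
  by rewrite mulrC.
have h2 : expR (- (3 * A)) * `|t| <= s.
  have tT : t ^+ 2 = `|t| ^+ 2 by rewrite real_normK // num_real.
  have h3 := ar_t `|t| s0 SiS.
  rewrite -tT -/A in h3.
  have h4 : `|t| <= s * expR (3 * A).
    apply: le_trans h3 _; apply: ler_wpM2l; [lra | exact: expR_ge1Dx].
  have := ler_wpM2l (expR_ge0 (- (3 * A))) h4; move: (3 * A) => B.
  by rewrite mulrCA -expRD addNr expR0 mulr1.
have a0 := normr_ge0 a.
apply: le_trans (ler_wpM2l (expR_ge0 _) h1) _.
have -> : expR (- (3 * A)) * (`|a| * `|t|) = `|a| * (expR (- (3 * A)) * `|t|) by ring.
exact: ler_wpM2l.
Qed.

Lemma cont_QB (R : realType) (s L x : R) : 0 < s ->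
  continuous (fun y : R => 2 * normal_pdf 0 s (y - x) / (1 + expR (- L * (y - x)))).
Proof.
move=> s0 y.
apply: cvgM.
  apply: cvgM; first exact: cvg_cst.
  apply: (continuous_comp (f := fun y => y - x)); last exact: continuous_normal_pdf (lt0r_neq0 s0) _.
  by apply: cvgB; [exact: cvg_id | exact: cvg_cst].
apply: (continuous_comp (f := fun y => 1 + expR (- L * (y - x)))); last first.
  by apply: inv_continuous; rewrite gt_eqF // addr_gt0 ?expR_gt0.
apply: cvgD; first exact: cvg_cst.
apply: (continuous_comp (f := fun y => - L * (y - x))); last exact: continuous_expR.
apply: cvgM; first exact: cvg_cst.
by apply: cvgB; [exact: cvg_id | exact: cvg_cst].
Qed.

Lemma near_oo (R : realType) (K : R) (P : R -> Prop) :
  (forall lam, K < lam -> P lam) -> \forall lam \near +oo%R, P lam.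
Proof. move=> h; exists K; split; [exact: num_real | exact: h]. Qed.

Unset Implicit Arguments. Set Strict Implicit.

Theorem proposition2p2 (R : realType) (p : R -> R)
  (hp : pos_diff_density p)
  (hbd : exists delta : R, 0 < delta /\ exists M : R,
           forall y : R, `|y| < delta -> `|logder p y| <= M)
  (sigma : R) (hsigma : 0 < sigma) (x : R) :
  (exists C : R, \forall lam \near +oo%R,
      (lam%:E * tv_dist (QM p sigma lam x) (QR sigma x) <= C%:E)%E) /\
  (exists C : R, \forall lam \near +oo%R,
      (lam%:E * tv_dist (QB p sigma lam x) (QR sigma x) <= C%:E)%E).
Proof.
case: hp => ppos [pder _].
case: hbd => delta [d0 [M hM]].
have M0 : 0 <= M by apply: le_trans (hM 0 _); rewrite ?normr0 ?normr_ge0.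
set K := 1 + `|x| / delta + sigma ^+ 2 * M.
have hL : forall lam, K < lam ->
    0 < lam /\ `|logder (scaled_density p lam) x| <= M / lam.
  move=> lam hK.
  have xd : 0 <= `|x| / delta by rewrite divr_ge0 // ltW.
  have sM : 0 <= sigma ^+ 2 * M by rewrite mulr_ge0 ?sqr_ge0.
  have l0 : 0 < lam by rewrite /K in hK; lra.
  split => //.
  have il0 : 0 <= lam^-1 by rewrite invr_ge0 ltW.
  rewrite logder_scaled // normrM (ger0_norm il0) mulrC.
  apply: ler_wpM2r => //; apply: hM.
  rewrite normrM (ger0_norm il0) ltr_pdivrMr //.
  have : `|x| / delta < lam by rewrite /K in hK; lra.
  by rewrite ltr_pdivrMr // mulrC.
have s2 : 0 < sigma ^+ 2 by rewrite exprn_gt0.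
split.
- set KM := 2 * ((8 * sigma ^+ 2 + 1) * (sigma ^+ 2)^-1 / 2 * expR (3 * (sigma ^+ 2)^-1 / 2)).
  have KM0 : 0 <= KM.
    rewrite /KM mulr_ge0 // mulr_ge0 ?expR_ge0 // divr_ge0 // mulr_ge0 ?invr_ge0 ?ltW //.
    lra.
  exists (sigma ^+ 2 / 2 * M * KM); apply: (@near_oo R K) => lam hK.
  have [l0 hl] := hL lam hK.
  set L := logder (scaled_density p lam) x in hl *.
  rewrite /QM /QR -/L.
  set d := sigma ^+ 2 / 2 * L.
  have hd : lam * `|d| <= sigma ^+ 2 / 2 * M.
    rewrite /d normrM (ger0_norm (x := sigma ^+ 2 / 2)); last by rewrite divr_ge0 // ltW.
    rewrite mulrCA ler_wpM2l //; first by rewrite divr_ge0 // ltW.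
    by rewrite -ler_pdivlMl // mulrC.
  have d1 : `|d| <= 1.
    have : sigma ^+ 2 / 2 * M <= lam.
      rewrite /K in hK; have := normr_ge0 x; have : 0 <= `|x| / delta by rewrite divr_ge0 // ltW.
      have : 0 <= sigma ^+ 2 * M by rewrite mulr_ge0 // ltW.
      lra.
    move=> h; have := le_trans hd h; rewrite -{2}[lam]mulr1 ler_pM2l //.
  have c0 : 0 <= `|d| * KM by rewrite mulr_ge0.
  have tv := @tv_bound R (normal_pdf (x + d) sigma) x sigma (`|d| * KM) hsigma c0
    (fun y => normal_pdf_ge0 _ _ _) (measurable_normal_pdf _ _)
    (fun y => QM_pt x y hsigma d1).
  apply: le_trans (lee_wpmul2l _ tv) _; first by rewrite lee_fin ltW.
  rewrite -EFinM lee_fin mulrA ler_wpM2r //.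
- exists (2 * sigma * M); apply: (@near_oo R K) => lam hK.
  have [l0 hl] := hL lam hK.
  set L := logder (scaled_density p lam) x in hl *.
  rewrite /QB /QR -/L.
  have c0 : 0 <= `|L| * (2 * sigma) by rewrite mulr_ge0 // mulr_ge0 // ltW.
  have f10 : forall y, 0 <= 2 * normal_pdf 0 sigma (y - x) / (1 + expR (- L * (y - x))).
    move=> y; apply: divr_ge0; first by rewrite mulr_ge0 ?normal_pdf_ge0.
    by apply: addr_ge0 => //; exact: expR_ge0.
  have tv := @tv_bound R (fun y => 2 * normal_pdf 0 sigma (y - x) / (1 + expR (- L * (y - x))))
    x sigma (`|L| * (2 * sigma)) hsigma c0 f10
    (continuous_measurable_fun (@cont_QB _ sigma L x hsigma))
    (fun y => QB_pt L x y hsigma).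
  apply: le_trans (lee_wpmul2l _ tv) _; first by rewrite lee_fin ltW.
  rewrite -EFinM lee_fin mulrA.
  have : lam * `|L| <= M by rewrite -ler_pdivlMl // mulrC.
  have := ltW hsigma.
  nra.
Qed.
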